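(* Let $k\ge 1$ and let $\mathbf H_k=(h_{i,j})_{1\le i,j\le k}$ be a complex lower Hessenberg matrix, i.e. $h_{i,j}=0$ whenever $j-i>1$. Put $c_{i,j}=h_{i,j}$ if $j\neq i+1$ and $c_{i,i+1}=-h_{i,i+1}$. For $m\in\{0,1,\dots,2^{k-1}-1\}$ and $1\le j\le k$ let $\sigma_{k,j}(m)=j-\zeta_{k,j}(\tau_k(m))$, where $\tau_k$ and $\zeta_{k,j}$ are as defined in the context. Then $$\det(\mathbf H_k)=\sum_{m=0}^{2^{k-1}-1}\ \prod_{j=1}^{k} c_{j,\sigma_{k,j}(m)} .$$
   Context: $\mathfrak R_k$ denotes the set of arrays $r=(r_1,\dots,r_k)$ with $r_i\in\{0,1\}$ for $1\le i\le k-1$ and $r_k=1$. For $m\in\{0,\dots,2^{k-1}-1\}$, $\tau_k(m)=(\lfloor m/2^{k-2}\rfloor \bmod 2,\ \lfloor m/2^{k-3}\rfloor \bmod 2,\dots,\lfloor m/2^{0}\rfloor \bmod 2,\ 1)\in\mathfrak R_k$ (for $k=1$, $\tau_1(0)=(1)$). For $r\in\mathfrak R_k$ and $1\le i\le k$: $\zeta_{k,i}(r)=-1$ if $r_i=0$; if $r_i=1$ and there is an index $l<i$ with $r_l=1$, then $\zeta_{k,i}(r)=i-l-1$ where $l$ is the largest such index (i.e. $\zeta_{k,i}(r)$ is the number of consecutive zeros immediately preceding $r_i$); if $r_i=1$ and $r_l=0$ for all $l<i$, then $\zeta_{k,i}(r)=i-1$. Thus $\sigma_{k,j}(m)=j+1$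 exactly when the $j$-th component of $\tau_k(m)$ is $0$, in which case the factor is $c_{j,j+1}=-h_{j,j+1}$. *)

(* Defs.v *)
From HB Require Import structures.
From mathcomp Require Import all_boot all_order all_algebra.
From mathcomp Require Import reals complex.
Set Implicit Arguments. Unset Strict Implicit. Unset Printing Implicit Defensive.
Import Order.TTheory GRing.Theory Num.Theory.
Local Open Scope ring_scope.

(* Arrays r = (r_1,...,r_k) are represented 1-based as functions nat -> bool
   (true = 1, false = 0); only indices 1..k are meaningful. *)

Definition tau (k m : nat) : nat -> bool :=
  fun i => if i == k then true else odd (m %/ 2 ^ (k - 1 - i)).

Definition zeta (k i : nat) (r : nat -> bool) : int :=
  if ~~ r i then -1
  else if [exists l : 'I_i, (0 < (l : nat))%N && r l]
       then ((i - (\max_(l < i | (0 < (l : nat))%N && r l) (l : nat)) - 1)%N)%:Z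
       else (i - 1)%N%:Z.

Definition sigma (k j m : nat) : int := j%:Z - zeta k j (tau k m).

(* 1-based entry h_{i,j} of a k x k matrix (0 outside 1..k) *)
Definition hent (T : nmodType) (k : nat) (H : 'M[T]_k) (i j : nat) : T :=
  match k as n return 'M[T]_n -> T with
  | 0 => fun _ => 0
  | n.+1 => fun H' => if ((0 < i <= n.+1) && (0 < j <= n.+1))%N
                      then H' (inord i.-1) (inord j.-1) else 0
  end H.

(* c_{i,j} = h_{i,j} if j <> i+1, and c_{i,i+1} = - h_{i,i+1};
   the second index is an integer (sigma values are ints). *)
Definition cent (T : zmodType) (k : nat) (H : 'M[T]_k) (i : nat) (j : int) : T :=
  match j with
  | Posz jn => if jn == i.+1 then - hent H i jn else hent H i jn
  | Negz _ => 0
  end.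

Definition lower_hessenberg (T : nmodType) (k : nat) (H : 'M[T]_k) : Prop :=
  forall i j : 'I_k, (i.+1 < j)%N -> H i j = 0.

(* Main.v *)
Require Import Defs.
From HB Require Import structures.
From mathcomp Require Import all_boot all_order all_algebra.
From mathcomp Require Import reals complex.
From mathcomp Require Import zify.
Import Order.TTheory GRing.Theory Num.Theory.
Set Implicit Arguments. Unset Strict Implicit. Unset Printing Implicit Defensive.
Local Open Scope ring_scope.

Definition Mx (i : nat) (r : nat -> bool) : nat :=
  (\max_(l < i | (0 < (l : nat))%N && r l) (l : nat))%N.

Lemma zetaE k i r : zeta k i r = if r i then ((i - Mx i r - 1)%N)%:Z else -1.
Proof.
rewrite /zeta /Mx; case: (r i) => //=.
case: ifP => // /negbT hE.
congr (Posz _); rewrite (@big1 _ _ _ _ _ _ (fun l : 'I_i => (l : nat))) ?subn0 //.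
move=> l hl; case/negP: hE; apply/existsP; by exists l.
Qed.

Lemma Mx_le i r : (Mx i r <= i.-1)%N.
Proof. apply/bigmax_leqP => l _; have := ltn_ord l; lia. Qed.

Lemma MxS i r : Mx i.+1 r = if (0 < i)%N && r i then i else Mx i r.
Proof.
rewrite /Mx big_mkcond big_ord_recr /= -big_mkcond /=.
have := Mx_le i r; rewrite /Mx big_mkcond => hle.
case: ifP => _; first by apply/maxn_idPr; exact: leq_trans hle (leq_pred i).
by rewrite maxn0.
Qed.

Lemma Mx_ext i r r' : (forall l, (0 < l < i)%N -> r l = r' l) -> Mx i r = Mx i r'.
Proof.
move=> h; rewrite /Mx; apply: eq_bigl => l.
have [hl|hl] := boolP (0 < l)%N => //=.
by rewrite h // hl ltn_ord.
Qed.

Lemma sigma_ext k k' j m m' : (0 < j)%N ->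
  (forall l, (0 < l <= j)%N -> tau k m l = tau k' m' l) ->
  sigma k j m = sigma k' j m'.
Proof.
move=> hj h; rewrite /sigma !zetaE.
rewrite h ?hj ?leqnn // (@Mx_ext j (tau k m) (tau k' m')) // => l /andP[l0 lj].
by apply: h; rewrite l0 ltnW.
Qed.

Lemma tau_low p q b j : (b < 2)%N -> (0 < j <= p)%N ->
  tau p.+2 (2 * q + b) j = tau p.+1 q j.
Proof.
move=> hb /andP[j0 jp]; rewrite /tau.
have -> : (j == p.+2) = false by apply/negbTE; lia.
have -> : (j == p.+1) = false by apply/negbTE; lia.
have -> : (p.+2 - 1 - j = (p.+1 - 1 - j).+1)%N by lia.
rewrite expnS divnMA; congr (odd (_ %/ _)).
rewrite divnDl ?dvdn_mulr // mulKn // divn_small ?addn0 //.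
Qed.

Lemma tau_top k m : tau k m k = true.
Proof. by rewrite /tau eqxx. Qed.

Lemma tau_odd_p p q : tau p.+2 (2 * q + 1) p.+1 = true.
Proof.
rewrite /tau; have -> : (p.+1 == p.+2) = false by apply/negbTE; lia.
by rewrite subSS subn0 subnn expn0 divn1 oddD oddM andFb.
Qed.

Lemma tau_even_p p q : tau p.+2 (2 * q) p.+1 = false.
Proof.
rewrite /tau; have -> : (p.+1 == p.+2) = false by apply/negbTE; lia.
by rewrite subSS subn0 subnn expn0 divn1 oddM andFb.
Qed.

Lemma sigma_odd_low p q j : (0 < j <= p.+1)%N ->
  sigma p.+2 j (2 * q + 1) = sigma p.+1 j q.
Proof.
move=> /andP[j0 jp]; apply: sigma_ext => // l /andP[l0 lj].
have [lp|lp] := leqP l p; first by apply: tau_low; rewrite ?l0.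
have -> : l = p.+1 by lia.
by rewrite tau_odd_p tau_top.
Qed.

Lemma sigma_even_low p q j : (0 < j <= p)%N ->
  sigma p.+2 j (2 * q) = sigma p.+1 j q.
Proof.
move=> /andP[j0 jp]; apply: sigma_ext => // l /andP[l0 lj].
have := @tau_low p q 0 l; rewrite addn0; apply => //; lia.
Qed.

Lemma sigma_odd_top p q : sigma p.+2 p.+2 (2 * q + 1) = (p.+2)%:Z.
Proof.
rewrite /sigma zetaE tau_top MxS /= tau_odd_p.
have -> : (p.+2 - p.+1 - 1 = 0)%N by lia.
by rewrite subr0.
Qed.

Lemma sigma_even_p p q : sigma p.+2 p.+1 (2 * q) = (p.+2)%:Z.
Proof. rewrite /sigma zetaE tau_even_p; lia. Qed.

Lemma sigma_even_top p q : sigma p.+2 p.+2 (2 * q) = sigma p.+1 p.+1 q.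
Proof.
rewrite /sigma !zetaE !tau_top MxS /= tau_even_p /=.
rewrite (@Mx_ext p.+1 (tau p.+2 (2 * q)) (tau p.+1 q)); last first.
  move=> l /andP[l0 lp]; have := @tau_low p q 0 l; rewrite addn0; apply => //; lia.
have := Mx_le p.+1 (tau p.+1 q); lia.
Qed.

Lemma sigma_base : sigma 1 1 0 = 1.
Proof. by rewrite /sigma zetaE tau_top MxS /Mx big_ord0. Qed.

Lemma sum_pairs (T : nmodType) (F : nat -> T) N :
  \sum_(m < 2 * N) F m = \sum_(q < N) (F (2 * q)%N + F (2 * q + 1)%N).
Proof.
rewrite -(big_mkord xpredT F) -(big_mkord xpredT (fun q => F (2*q)%N + F (2*q+1)%N)).
elim: N => [|N IH]; first by rewrite muln0 !big_geq.
rewrite [RHS]big_nat_recr //= -IH.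
have -> : (2 * N.+1 = (2 * N).+1.+1)%N by lia.
rewrite big_nat_recr //= big_nat_recr //= -addrA; congr (_ + (_ + _)); congr F; lia.
Qed.

Definition Mrow (T : comNzRingType) k (H : 'M[T]_k) p (u : nat -> T) : 'M[T]_p.+1 :=
  \matrix_(i, j) if (i < p)%N then hent H i.+1 j.+1 else u j.+1.

Lemma hent_hess (T : comNzRingType) k (H : 'M[T]_k) i j :
  lower_hessenberg H -> (i.+1 < j)%N -> hent H i j = 0.
Proof.
case: k H => // k H hH hij /=.
case: ifP => // /andP[/andP[i0 ik] /andP[j0 jk]].
apply: hH; rewrite /= !inordK; lia.
Qed.

Lemma det_rec (T : comNzRingType) k (H : 'M[T]_k) p u :
  lower_hessenberg H ->
  \det (Mrow H p.+1 u) = u p.+2 * \det (Mrow H p (hent H p.+1))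
                         - hent H p.+1 p.+2 * \det (Mrow H p u).
Proof.
move=> hH.
rewrite (expand_det_col _ ord_max) big_ord_recr /= big_ord_recr /=.
rewrite big1 ?add0r; last first.
  move=> i _; rewrite /Mrow mxE /= ifT; last by have := ltn_ord i; lia.
  by rewrite hent_hess ?mul0r //=; have := ltn_ord i; lia.
rewrite /cofactor !mxE /= ltnn ifT //.
have -> : row' ord_max (col' ord_max (Mrow H p.+1 u)) = Mrow H p (hent H p.+1).
  apply/matrixP => i j; rewrite !mxE.
  rewrite !lift_max /= ltn_ord.
  case: (ltnP i p) => // hip.
  have hi : (i < p.+1)%N := ltn_ord i.
  by have -> : (i : nat) = p by apply/eqP; rewrite eqn_leq hip -ltnS hi.
have -> : row' (widen_ord (leqnSn p.+1) ord_max) (col' ord_max (Mrow H p.+1 u)) = Mrow H p u.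
  apply/matrixP => i j; rewrite !mxE !lift_max /=.
  have -> : bump p i = if (i < p)%N then (i : nat) else i.+1.
    by rewrite /bump; case: (ltnP i p) => h; rewrite ?add0n ?add1n.
  by case: (ltnP i p) => h; rewrite ?ltnn ?ltnS ?h /= ?(ltnW h) // ltnNge h.
have e1 : (-1) ^+ (p.+1 + p.+1) = 1 :> T by rewrite addnn -mul2n mulnC exprM sqrr_sign.
have e2 : (-1) ^+ (p + p.+1) = -1 :> T by rewrite addnS exprS addnn -mul2n mulnC exprM sqrr_sign mulr1.
by rewrite e1 e2 mul1r mulN1r mulrN addrC.
Qed.

Lemma cent_next (T : comNzRingType) k (H : 'M[T]_k) i :
  cent H i (i.+1)%:Z = - hent H i i.+1.
Proof. by rewrite /cent eqxx. Qed.

Definition G (T : comNzRingType) k (H : 'M[T]_k) p (v : int -> T) : T :=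
  \sum_(m < 2 ^ p) ((\prod_(1 <= j < p.+1) cent H j (sigma p.+1 j m)) * v (sigma p.+1 p.+1 m)).

Lemma G_rec (T : comNzRingType) k (H : 'M[T]_k) p v :
  G H p.+1 v = v (p.+2)%:Z * G H p (cent H p.+1) - hent H p.+1 p.+2 * G H p v.
Proof.
rewrite /G expnS (sum_pairs (fun m : nat => (\prod_(1 <= j < p.+2) cent H j (sigma p.+2 j m)) * v (sigma p.+2 p.+2 m))).
rewrite !mulr_sumr -sumrB; apply: eq_bigr => q _.
rewrite addrC; congr (_ + _).
  rewrite big_nat_recr //= sigma_odd_top sigma_odd_low; last by apply/andP.
  rewrite (@eq_big_nat _ _ _ 1 p.+1 _ (fun j => cent H j (sigma p.+1 j q))); last first.
    by move=> j hj; rewrite sigma_odd_low //; lia.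
  by rewrite mulrC.
rewrite big_nat_recr //= sigma_even_p sigma_even_top cent_next.
rewrite (@eq_big_nat _ _ _ 1 p.+1 _ (fun j => cent H j (sigma p.+1 j q))); last first.
  by move=> j hj; rewrite sigma_even_low //; lia.
rewrite mulrN mulNr; congr (- _).
by rewrite [_ * hent _ _ _]mulrC -mulrA.
Qed.

Lemma G_det (T : comNzRingType) k (H : 'M[T]_k) p v : lower_hessenberg H ->
  G H p v = \det (Mrow H p (fun j => v j%:Z)).
Proof.
move=> hH; elim: p v => [|p IH] v.
  rewrite /G expn0 big_ord1 big_geq // mul1r det_mx11 mxE /=.
  by rewrite sigma_base.
rewrite G_rec !IH det_rec //; congr (_ * _ - _).
congr (\det _); apply/matrixP => i j; rewrite !mxE.
case: ifP => // _; rewrite /cent ifN //.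
by have := ltn_ord j; rewrite eqSS; apply: contraTN => /eqP ->; rewrite ltnn.
Qed.

Unset Implicit Arguments.

Theorem theorem1 (R : realType) (k : nat) (hk : (1 <= k)%N)
  (H : 'M[R[i]]_k) (hH : lower_hessenberg H) :
  \det H = \sum_(m < 2 ^ (k - 1)) \prod_(1 <= j < k.+1) cent H j (sigma k j m).
Proof.
case: k hk H hH => // p _ H hH.
rewrite subSS subn0.
have -> : \sum_(m < 2 ^ p) \prod_(1 <= j < p.+2) cent H j (sigma p.+1 j m) =
          G H p (cent H p.+1).
  by apply: eq_bigr => m _; rewrite big_nat_recr.
rewrite G_det //; congr (\det _); apply/matrixP => i j; rewrite !mxE /=.
have hi := ltn_ord i; have hj := ltn_ord j.
have -> : (j.+1 == p.+2) = false by apply/negbTE; lia.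
rewrite hi hj ltnSn /= !inord_val.
case: ltnP => // hip.
have -> : i = inord p by apply: val_inj; rewrite /= inordK //; lia.
by [].
Qed.
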